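(* A countably infinite disconnected graph $G$ is ME-homogeneous if and only if $G\cong I_\omega[K_\omega]$ or $G\cong I_\omega[K_n]$ for some positive integer $n$.
   Context: All graphs are undirected and loopless; subgraphs are induced. A monomorphism is an injective map sending adjacent vertices to adjacent vertices. $G$ is ME-homogeneous if every monomorphism between finite induced subgraphs of $G$ is the restriction of a surjective endomorphism of $G$. $K_\kappa$ is the complete graph and $I_\kappa$ the edgeless graph on $\kappa$ vertices; the lexicographic product $G[H]$ has vertex set $G\times H$ with $(g,h)\sim(g',h')$ iff $g\sim g'$, or $g=g'$ and $h\sim h'$. Thus $I_\omega[K_m]$ is a disjoint union of countably many copies of $K_m$. *)

(* Defs.v *)
From Stdlib Require Import List Relations.
Import ListNotations.

Definition is_graph {V : Type} (adj : V -> V -> Prop) : Prop :=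
  (forall x y, adj x y -> adj y x) /\ (forall x, ~ adj x x).

Definition bijective_map {A B : Type} (f : A -> B) : Prop :=
  (forall x y, f x = f y -> x = y) /\ (forall y, exists x, f x = y).

Definition countably_infinite (V : Type) : Prop :=
  exists f : nat -> V, bijective_map f.

Definition disconnected {V : Type} (adj : V -> V -> Prop) : Prop :=
  exists u v : V, ~ clos_refl_trans V adj u v.

Definition graph_iso {V W : Type} (R : V -> V -> Prop) (S : W -> W -> Prop) : Prop :=
  exists phi : V -> W, bijective_map phi /\ (forall x y, R x y <-> S (phi x) (phi y)).

(* ME-homogeneity: finite induced subgraphs are given by (finite) lists of
   vertices A, B; a monomorphism A -> B is represented by a map f : V -> V
   (only its values on A matter) that sends A into B, is injective on A and
   sends adjacent vertices of A to adjacent vertices. *)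
Definition ME_homogeneous {V : Type} (adj : V -> V -> Prop) : Prop :=
  forall (A B : list V) (f : V -> V),
    (forall x, In x A -> In (f x) B) ->
    (forall x y, In x A -> In y A -> f x = f y -> x = y) ->
    (forall x y, In x A -> In y A -> adj x y -> adj (f x) (f y)) ->
    exists g : V -> V,
      (forall x y, adj x y -> adj (g x) (g y)) /\
      (forall y, exists x, g x = y) /\
      (forall x, In x A -> g x = f x).

Definition edgeless (T : Type) : T -> T -> Prop := fun _ _ => False.
Definition complete (T : Type) : T -> T -> Prop := fun x y => x <> y.
Definition lex_product {A B : Type} (RA : A -> A -> Prop) (RB : B -> B -> Prop)
  : A * B -> A * B -> Prop :=
  fun p q => RA (fst p) (fst q) \/ (fst p = fst q /\ RB (snd p) (snd q)).

Definition fin_n (n : nat) : Type := { k : nat | k < n }.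

(* Main.v *)
Require Import Defs.
From Stdlib Require Import List Relations Arith Lia Classical ClassicalEpsilon.
Import ListNotations.

Definition decb (P : nat -> Prop) (k : nat) : bool :=
  if excluded_middle_informative (P k) then true else false.
Definition rank (P : nat -> Prop) (n : nat) : nat := length (filter (decb P) (seq 0 n)).

Lemma decb_true P k : decb P k = true <-> P k.
Proof. unfold decb; destruct (excluded_middle_informative (P k)); split; congruence. Qed.

Lemma rank_S P n : rank P (S n) = rank P n + (if decb P n then 1 else 0).
Proof.
  unfold rank. rewrite seq_S, filter_app, length_app. simpl. destruct (decb P n); simpl; lia.
Qed.

Lemma rank_mono P n m : n <= m -> rank P n <= rank P m.
Proof.
  induction 1; auto. rewrite rank_S. lia.
Qed.

Lemma rank_Sin P n : P n -> rank P (S n) = S (rank P n).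
Proof. intro H. rewrite rank_S. apply decb_true in H. rewrite H. lia. Qed.

Lemma rank_inj P a b : P a -> P b -> rank P a = rank P b -> a = b.
Proof.
  intros Ha Hb E. destruct (lt_eq_lt_dec a b) as [[H|H]|H]; auto.
  - pose proof (rank_mono P (S a) b H). rewrite rank_Sin in H0 by auto. lia.
  - pose proof (rank_mono P (S b) a H). rewrite rank_Sin in H0 by auto. lia.
Qed.

Lemma rank_ivt P N j : j < rank P N -> exists k, k < N /\ P k /\ rank P k = j.
Proof.
  induction N; intros H.
  - unfold rank in H; simpl in H; lia.
  - rewrite rank_S in H. destruct (le_lt_dec (rank P N) j).
    + destruct (decb P N) eqn:E; [|lia]. exists N. apply decb_true in E. repeat split; auto; lia.
    + destruct (IHN l) as [k [? [? ?]]]. exists k; repeat split; auto.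
Qed.

Definition infinite (P : nat -> Prop) := forall m, exists k, m <= k /\ P k.
Definition bounded (P : nat -> Prop) N := forall k, P k -> k < N.

Lemma rank_unbounded P : infinite P -> forall j, exists N, j < rank P N.
Proof.
  intros Hi j. induction j.
  - destruct (Hi 0) as [k [_ Hk]]. exists (S k). rewrite rank_Sin; auto; lia.
  - destruct IHj as [N HN]. destruct (Hi N) as [k [Hk1 Hk2]]. exists (S k).
    rewrite rank_Sin; auto. pose proof (rank_mono P _ _ Hk1). lia.
Qed.

Lemma rank_surj_inf P : infinite P -> forall j, exists k, P k /\ rank P k = j.
Proof.
  intros Hi j. destruct (rank_unbounded P Hi j) as [N HN].
  destruct (rank_ivt P N j HN) as [k [_ [? ?]]]. eauto.
Qed.

Lemma rank_lt_bound P N k : bounded P N -> P k -> rank P k < rank P N.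
Proof.
  intros B Hk. pose proof (B k Hk). pose proof (rank_mono P (S k) N H).
  rewrite rank_Sin in H0; auto; lia.
Qed.

Lemma NoDup_map_on {A B} (P : A -> Prop) (h : A -> B) (l : list A) :
  NoDup l -> (forall x, In x l -> P x) ->
  (forall x y, P x -> P y -> h x = h y -> x = y) -> NoDup (map h l).
Proof.
  induction l; intros ND HP Hi; simpl; constructor.
  - intro Hin. apply in_map_iff in Hin. destruct Hin as [y [E Hy]].
    inversion ND; subst. assert (y = a) by (apply Hi; auto; [apply HP; simpl; auto|apply HP; simpl; auto]).
    subst; contradiction.
  - inversion ND; subst. apply IHl; auto. intros; apply HP; simpl; auto.
Qed.

Lemma PH (P Q : nat -> Prop) (h : nat -> nat) (l LQ : list nat) :
  NoDup l -> (forall x, In x l -> P x) ->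
  (forall x, P x -> Q (h x)) -> (forall x y, P x -> P y -> h x = h y -> x = y) ->
  (forall k, Q k -> In k LQ) -> length l <= length LQ.
Proof.
  intros ND HP HQ Hi HL. rewrite <- (length_map h l). apply NoDup_incl_length.
  - eapply NoDup_map_on; eauto.
  - intros y Hy. apply in_map_iff in Hy. destruct Hy as [x [<- Hx]]. apply HL, HQ, HP, Hx.
Qed.

Lemma infinite_list P : infinite P -> forall n, exists l, NoDup l /\ length l = n /\ (forall x, In x l -> P x).
Proof.
  intros Hi n.
  assert (forall n, exists l b, NoDup l /\ length l = n /\ (forall x, In x l -> P x /\ x < b)) as G.
  { induction n0.
    - exists [], 0. repeat split; simpl; try constructor; tauto.
    - destruct IHn0 as [l [b [H1 [H2 H3]]]]. destruct (Hi b) as [k [Hk1 Hk2]].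
      exists (k :: l), (S k). split; [|split]; simpl.
      + constructor; auto. intro Hin. apply H3 in Hin. lia.
      + lia.
      + intros y [<-|Hy]; [split; auto; lia|]. apply H3 in Hy; split; [tauto|lia]. }
  destruct (G n) as [l [b [? [? ?]]]]. exists l. repeat split; auto. intros; apply H1; auto.
Qed.

Lemma filter_list P N : bounded P N -> NoDup (filter (decb P) (seq 0 N)) /\
   (forall x, In x (filter (decb P) (seq 0 N)) <-> P x).
Proof.
  intros B. split. apply NoDup_filter, seq_NoDup.
  intro x. rewrite filter_In, in_seq, decb_true. split; [tauto|]. intro H; pose proof (B x H); split; auto; lia.
Qed.

Lemma inf_inj_bounded P Q h N : infinite P -> bounded Q N ->
  (forall x, P x -> Q (h x)) -> (forall x y, P x -> P y -> h x = h y -> x = y) -> False.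
Proof.
  intros Hi B HQ Hinj. destruct (infinite_list P Hi (S N)) as [l [ND [Hl HP]]].
  assert (length l <= length (seq 0 N)).
  { eapply PH; eauto. intros k Hk. apply in_seq. pose proof (B k Hk); lia. }
  rewrite length_seq in H; lia.
Qed.

Lemma fin_inj_le P Q h NP NQ : bounded P NP -> bounded Q NQ ->
  (forall x, P x -> Q (h x)) -> (forall x y, P x -> P y -> h x = h y -> x = y) -> rank P NP <= rank Q NQ.
Proof.
  intros BP BQ HQ Hi. destruct (filter_list P NP BP) as [ND1 H1]. destruct (filter_list Q NQ BQ) as [ND2 H2].
  unfold rank. eapply PH; eauto.
  - intros x Hx; apply H1; auto.
  - intros k Hk; apply H2; auto.
Qed.

Definition swap {K} (a b z : K) : K :=
  if excluded_middle_informative (z = a) then b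
  else if excluded_middle_informative (z = b) then a else z.

Lemma swap_inj {K} (a b : K) x y : swap a b x = swap a b y -> x = y.
Proof.
  unfold swap.
  destruct (excluded_middle_informative (x = a)), (excluded_middle_informative (y = a));
  destruct (excluded_middle_informative (x = b)), (excluded_middle_informative (y = b)); intros; subst; congruence.
Qed.

Lemma ext_inj {K X : Type} (L : list X) (d r : X -> K) :
  (forall x y, In x L -> In y L -> d x = d y -> x = y) ->
  (forall x y, In x L -> In y L -> r x = r y -> x = y) ->
  exists s : K -> K, (forall a b, s a = s b -> a = b) /\ (forall x, In x L -> s (d x) = r x).
Proof.
  induction L as [|x L IH]; intros Hd Hr.
  - exists (fun z => z). split; auto. intros x [].
  - destruct IH as [s [Hs1 Hs2]].
    { intros; apply Hd; simpl; auto. }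
    { intros; apply Hr; simpl; auto. }
    destruct (excluded_middle_informative (In x L)) as [Hin|Hnin].
    + exists s; split; auto. intros y [<-|Hy]; auto.
    + exists (fun z => swap (s (d x)) (r x) (s z)). split.
      * intros a b E. apply swap_inj in E. auto.
      * intros y [<-|Hy].
        -- unfold swap. destruct (excluded_middle_informative (s (d x) = s (d x))); congruence.
        -- rewrite (Hs2 y Hy). unfold swap.
           destruct (excluded_middle_informative (r y = s (d x))) as [E|].
           { rewrite <- Hs2 in E by auto. apply Hs1 in E. apply Hd in E; simpl; auto. subst; contradiction. }
           destruct (excluded_middle_informative (r y = r x)) as [E|]; auto.
           apply Hr in E; simpl; auto. subst; contradiction.
Qed.

Section W.
Variable K : Type.
Definition adjW := lex_product (edgeless nat) (complete K).

Lemma ME_W : ME_homogeneous adjW.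
Proof.
  intros A B f HB Hinj Hadj.
  assert (Hc : forall a a', In a A -> In a' A -> fst a = fst a' -> fst (f a) = fst (f a')).
  { intros a a' Ha Ha' E. destruct (classic (a = a')) as [->|Hne]; auto.
    assert (adjW a a') as Hw.
    { right. split; auto. intro E2. apply Hne. destruct a, a'; simpl in *; congruence. }
    apply Hadj in Hw; auto. destruct Hw as [[]|[? _]]; auto. }
  set (L := fun i => filter (fun a => Nat.eqb (fst a) i) A).
  assert (HL : forall i a, In a (L i) <-> In a A /\ fst a = i).
  { intros i a. unfold L. rewrite filter_In, Nat.eqb_eq. tauto. }
  assert (Hex : forall i, exists s : K -> K, (forall a b, s a = s b -> a = b) /\
             (forall x, In x (L i) -> s (snd x) = snd (f x))).
  { intro i. apply ext_inj.
    - intros x y Hx Hy E. apply HL in Hx, Hy. destruct x, y; simpl in *; f_equal; intuition congruence.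
    - intros x y Hx Hy E. apply HL in Hx, Hy. apply Hinj; try tauto.
      pose proof (Hc x y ltac:(tauto) ltac:(tauto) ltac:(intuition congruence)).
      destruct (f x), (f y); simpl in *; congruence. }
  set (sg := fun i => proj1_sig (constructive_indefinite_description _ (Hex i))).
  assert (Hsg : forall i, (forall a b, sg i a = sg i b -> a = b) /\
             (forall x, In x (L i) -> sg i (snd x) = snd (f x))).
  { intro i. exact (proj2_sig (constructive_indefinite_description _ (Hex i))). }
  set (c := fun i => match find (fun a => Nat.eqb (fst a) i) A with Some a => fst (f a) | None => i end).
  set (M := S (list_max (map fst A))).
  exists (fun p => if fst p <? M then (c (fst p), sg (fst p) (snd p)) else (fst p - M, snd p)).
  split; [|split].
  - intros p q [[]|[E Hn]]. rewrite <- E. destruct (fst p <? M).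
    + right. split; auto. intro E2. apply Hn. apply (proj1 (Hsg _)) in E2. congruence.
    + right. split; auto.
  - intros [j k]. exists (j + M, k). simpl.
    destruct (j + M <? M) eqn:E. apply Nat.ltb_lt in E; lia. f_equal; lia.
  - intros x Hx. assert (fst x <? M = true) as ->.
    { apply Nat.ltb_lt. unfold M. assert (fst x <= list_max (map fst A)); [|lia].
      pose proof (proj1 (list_max_le (map fst A) (list_max (map fst A))) (le_n _)) as H.
      rewrite Forall_forall in H. apply H. apply in_map; auto. }
    rewrite (proj2 (Hsg _)) by (apply HL; auto).
    unfold c. destruct (find (fun a => Nat.eqb (fst a) (fst x)) A) eqn:F.
    + apply find_some in F. destruct F as [Hp E]. apply Nat.eqb_eq in E.
      rewrite (Hc p x) by auto. destruct (f x); auto.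
    + exfalso. eapply find_none in F; eauto. rewrite Nat.eqb_refl in F; discriminate.
Qed.
End W.

Lemma ME_transport {V W} (R : V -> V -> Prop) (S : W -> W -> Prop) (phi : V -> W) :
  bijective_map phi -> (forall x y, R x y <-> S (phi x) (phi y)) ->
  ME_homogeneous S -> ME_homogeneous R.
Proof.
  intros [Hi Hs] HRS HM A B f HB Hinj Hadj.
  set (psi := fun w => proj1_sig (constructive_indefinite_description _ (Hs w))).
  assert (Hpsi : forall w, phi (psi w) = w) by (intro w; exact (proj2_sig (constructive_indefinite_description _ (Hs w)))).
  assert (Hpsi2 : forall v, psi (phi v) = v) by (intro v; apply Hi; auto).
  destruct (HM (map phi A) (map phi B) (fun w => phi (f (psi w)))) as [g [G1 [G2 G3]]].
  - intros w Hw. apply in_map_iff in Hw. destruct Hw as [x [<- Hx]]. rewrite Hpsi2. apply in_map; auto.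
  - intros w w' Hw Hw' E. apply in_map_iff in Hw, Hw'. destruct Hw as [x [<- Hx]], Hw' as [y [<- Hy]].
    rewrite !Hpsi2 in E. apply Hi in E. f_equal; auto.
  - intros w w' Hw Hw' E. apply in_map_iff in Hw, Hw'. destruct Hw as [x [<- Hx]], Hw' as [y [<- Hy]].
    rewrite !Hpsi2. apply HRS. apply Hadj; auto. apply HRS; auto.
  - exists (fun v => psi (g (phi v))). split; [|split].
    + intros x y H. apply HRS. rewrite !Hpsi. apply G1, HRS, H.
    + intro y. destruct (G2 (phi y)) as [w Hw]. exists (psi w). rewrite Hpsi, Hw; auto.
    + intros x Hx. rewrite G3 by (apply in_map; auto). rewrite Hpsi2, Hpsi2. auto.
Qed.

Definition eqv {V} (adj : V -> V -> Prop) x y := x = y \/ adj x y.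

Lemma crt_sym {V} (adj : V -> V -> Prop) : is_graph adj -> forall x y,
  clos_refl_trans V adj x y -> clos_refl_trans V adj y x.
Proof.
  intros [Hs _] x y H. induction H.
  - apply rt_step; auto.
  - apply rt_refl.
  - eapply rt_trans; eauto.
Qed.

Lemma endo_crt {V} (adj : V -> V -> Prop) g : (forall x y, adj x y -> adj (g x) (g y)) ->
  forall x y, clos_refl_trans V adj x y -> clos_refl_trans V adj (g x) (g y).
Proof.
  intros Hg x y H. induction H.
  - apply rt_step; auto.
  - apply rt_refl.
  - eapply rt_trans; eauto.
Qed.

Lemma clique {V} (adj : V -> V -> Prop) : is_graph adj -> disconnected adj -> ME_homogeneous adj ->
  forall x y, clos_refl_trans V adj x y -> eqv adj x y.
Proof.
  intros Hg [u0 [v0 Huv]] HM x y Hxy. unfold eqv.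
  destruct (classic (x = y \/ adj x y)) as [|Hn]; auto. exfalso.
  assert (exists z, ~ clos_refl_trans V adj x z) as [z Hz].
  { destruct (classic (clos_refl_trans V adj x u0)) as [H1|H1]; [|eauto].
    exists v0. intro H2. apply Huv. eapply rt_trans; [apply crt_sym; eauto|]; eauto. }
  assert (z <> x) by (intro; subst; apply Hz, rt_refl).
  assert (z <> y) by (intro; subst; auto).
  assert (x <> y) by tauto. assert (~ adj x y) by tauto.
  destruct Hg as [Hs Hirr].
  destruct (HM [x; y] [x; z] (fun w => if excluded_middle_informative (w = x) then x else z)) as [g [G1 [G2 G3]]].
  - intros w Hw. destruct (excluded_middle_informative (w = x)); simpl; auto.
  - intros a b Ha Hb. simpl in Ha, Hb.
    destruct Ha as [<-|[<-|[]]], Hb as [<-|[<-|[]]]; intros E; auto;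
    repeat destruct (excluded_middle_informative _); congruence.
  - intros a b Ha Hb Hab. simpl in Ha, Hb. exfalso.
    destruct Ha as [<-|[<-|[]]], Hb as [<-|[<-|[]]]; eauto; eapply Hirr; eauto.
  - apply Hz. pose proof (endo_crt adj g G1 x y Hxy) as Hc.
    rewrite !G3 in Hc by (simpl; auto).
    destruct (excluded_middle_informative (x = x)); [|congruence].
    destruct (excluded_middle_informative (y = x)); [congruence|]. auto.
Qed.


Lemma eqv_crt {V} (adj : V -> V -> Prop) x y : eqv adj x y -> clos_refl_trans V adj x y.
Proof. intros [<-|H]; [apply rt_refl|apply rt_step; auto]. Qed.

Lemma eqv_sym {V} (adj : V -> V -> Prop) : is_graph adj -> forall x y, eqv adj x y -> eqv adj y x.
Proof. intros [Hs _] x y [<-|H]; [left|right]; auto. Qed.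

Lemma eqv_trans {V} (adj : V -> V -> Prop) :
  (forall x y, clos_refl_trans V adj x y -> eqv adj x y) ->
  forall x y z, eqv adj x y -> eqv adj y z -> eqv adj x z.
Proof. intros Hcl x y z H1 H2. apply Hcl. eapply rt_trans; apply eqv_crt; eauto. Qed.

Lemma eqv_adj {V} (adj : V -> V -> Prop) x y : eqv adj x y -> x <> y -> adj x y.
Proof. intros [|]; tauto. Qed.

Lemma inj_comp {V} (adj : V -> V -> Prop) : is_graph adj -> ME_homogeneous adj ->
  (forall x y, clos_refl_trans V adj x y -> eqv adj x y) ->
  forall c d, exists h : V -> V, (forall x, eqv adj c x -> eqv adj d (h x)) /\
     (forall x x', eqv adj c x -> eqv adj c x' -> h x = h x' -> x = x').
Proof.
  intros Hg HM Hcl c d.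
  destruct (HM [c] [d] (fun _ => d)) as [g [G1 [G2 G3]]].
  - simpl; auto.
  - intros x y [<-|[]] [<-|[]]; auto.
  - intros x y [<-|[]] [<-|[]] H. exfalso; eapply (proj2 Hg); eauto.
  - exists g. split.
    + intros x Hx. apply Hcl. rewrite <- (G3 c) by (simpl; auto). apply endo_crt; auto. apply eqv_crt; auto.
    + intros x x' Hx Hx' E. destruct (classic (x = x')) as [|Hn]; auto. exfalso.
      assert (adj x x'). { apply eqv_adj; auto. eapply eqv_trans; eauto. apply eqv_sym; auto. }
      apply G1 in H. rewrite E in H. eapply (proj2 Hg); eauto.
Qed.

Definition Cr {V} (adj : V -> V -> Prop) (e : nat -> V) j k := eqv adj (e j) (e k).
Definition Rep {V} (adj : V -> V -> Prop) (e : nat -> V) k := forall j, j < k -> ~ eqv adj (e j) (e k).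

Lemma rep_exists {V} (adj : V -> V -> Prop) e :
  (forall x y, clos_refl_trans V adj x y -> eqv adj x y) ->
  forall k, exists j, Rep adj e j /\ eqv adj (e j) (e k).
Proof.
  intros Hcl k. induction k as [k IH] using lt_wf_ind.
  destruct (classic (Rep adj e k)) as [H|H].
  - exists k; split; auto; left; auto.
  - unfold Rep in H. apply not_all_ex_not in H. destruct H as [j Hj].
    apply imply_to_and in Hj. destruct Hj as [Hj1 Hj2]. apply NNPP in Hj2.
    destruct (IH j Hj1) as [j' [H1 H2]]. exists j'. split; auto. eapply eqv_trans; eauto.
Qed.

Lemma rep_unique {V} (adj : V -> V -> Prop) e : is_graph adj ->
  forall j j', Rep adj e j -> Rep adj e j' -> eqv adj (e j) (e j') -> j = j'.
Proof.
  intros Hg j j' H1 H2 E. destruct (lt_eq_lt_dec j j') as [[H|H]|H]; auto.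
  - exfalso. apply (H2 j H E).
  - exfalso. apply (H1 j' H). apply eqv_sym; auto.
Qed.

Lemma not_inf_bounded P : ~ infinite P -> exists N, bounded P N.
Proof.
  intro H. unfold infinite in H. apply not_all_ex_not in H. destruct H as [m Hm].
  exists m. intros k Hk. destruct (le_lt_dec m k); auto. exfalso; apply Hm; eauto.
Qed.

Lemma common_bound (P : nat -> nat -> Prop) m : (forall j, j < m -> exists N, bounded (P j) N) ->
  exists N, forall j, j < m -> bounded (P j) N.
Proof.
  induction m; intros H.
  - exists 0; intros; lia.
  - destruct IHm as [N1 HN1]. { intros; apply H; lia. }
    destruct (H m (Nat.lt_succ_diag_r m)) as [N2 HN2]. exists (N1 + N2).
    intros j Hj k Hk. destruct (Nat.eq_dec j m) as [->|].
    + pose proof (HN2 k Hk); lia.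
    + pose proof (HN1 j ltac:(lia) k Hk); lia.
Qed.

Lemma reps_infinite {V} (adj : V -> V -> Prop) (e : nat -> V) : is_graph adj -> disconnected adj ->
  ME_homogeneous adj -> bijective_map e ->
  (forall x y, clos_refl_trans V adj x y -> eqv adj x y) -> infinite (Rep adj e).
Proof.
  intros Hg [u0 [v0 Huv]] HM [Hei Hes] Hcl.
  destruct (classic (infinite (Rep adj e))) as [|Hn]; auto. exfalso.
  destruct (not_inf_bounded _ Hn) as [m Hm].
  assert (Hcov : forall k, exists j, j < m /\ eqv adj (e j) (e k)).
  { intro k. destruct (rep_exists adj e Hcl k) as [j [? ?]]. exists j; split; auto. }
  assert (exists j0, j0 < m /\ infinite (Cr adj e j0)) as [j0 [Hj0 Hinf]].
  { apply NNPP. intro H.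
    destruct (common_bound (Cr adj e) m) as [N HN].
    { intros j Hj. apply not_inf_bounded. intro Hi. apply H; eauto. }
    destruct (Hcov N) as [j [Hj Hje]]. pose proof (HN j Hj N Hje). lia. }
  set (idx := fun v => proj1_sig (constructive_indefinite_description _ (Hes v))).
  assert (Hidx : forall v, e (idx v) = v) by (intro v; exact (proj2_sig (constructive_indefinite_description _ (Hes v)))).
  assert (Hidx2 : forall k, idx (e k) = k) by (intro k; apply Hei; auto).
  pose proof (rank_surj_inf _ Hinf) as Hsel.
  set (sel := fun i => proj1_sig (constructive_indefinite_description _ (Hsel i))).
  assert (Hs : forall i, Cr adj e j0 (sel i) /\ rank (Cr adj e j0) (sel i) = i)
    by (intro i; exact (proj2_sig (constructive_indefinite_description _ (Hsel i)))).
  set (f := fun v => e (sel (idx v))).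
  assert (finj : forall x y, f x = f y -> x = y).
  { intros x y E. apply Hei in E. rewrite <- (Hidx x), <- (Hidx y). f_equal.
    rewrite <- (proj2 (Hs (idx x))), <- (proj2 (Hs (idx y))). congruence. }
  set (A := map e (seq 0 m)).
  destruct (HM A (map f A) f) as [g [G1 [G2 G3]]].
  - intros; apply in_map; auto.
  - intros; auto.
  - intros x y _ _ Hxy. apply eqv_adj.
    + eapply eqv_trans; eauto. apply eqv_sym; auto. apply (proj1 (Hs _)). apply (proj1 (Hs _)).
    + intro E. apply finj in E. subst. eapply (proj2 Hg); eauto.
  - assert (Hall : forall w, eqv adj (e j0) w).
    { intro w. destruct (G2 w) as [v <-]. destruct (Hcov (idx v)) as [j [Hj Hje]].
      rewrite Hidx in Hje.
      assert (In (e j) A) by (apply in_map, in_seq; lia).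
      apply (eqv_trans adj Hcl _ (g (e j))).
      - rewrite (G3 (e j)) by auto. apply (proj1 (Hs _)).
      - apply Hcl. apply endo_crt; auto. apply eqv_crt; auto. }
    apply Huv. apply eqv_crt. eapply eqv_trans; eauto. apply eqv_sym; auto.
Qed.

Lemma iso_build {V} (adj : V -> V -> Prop) (K : Type) (comp : V -> nat) (pos : V -> K) :
  is_graph adj ->
  (forall x y, comp x = comp y <-> eqv adj x y) ->
  (forall x y, eqv adj x y -> pos x = pos y -> x = y) ->
  (forall i p, exists x, comp x = i /\ pos x = p) ->
  graph_iso adj (lex_product (edgeless nat) (complete K)).
Proof.
  intros Hg Hc Hp Hs. exists (fun x => (comp x, pos x)). split; [split|].
  - intros x y E. injection E as E1 E2. apply Hp; auto. apply Hc; auto.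
  - intros [i p]. destruct (Hs i p) as [x [<- <-]]. eauto.
  - intros x y. split.
    + intro H. right. simpl. assert (eqv adj x y) by (right; auto).
      split. apply Hc; auto. intro E. apply Hp in E; auto. subst. eapply (proj2 Hg); eauto.
    + intros [[]|[E1 E2]]. simpl in *. apply Hc in E1. apply eqv_adj; auto.
      intro; subst; auto.
Qed.

Lemma fin_eq n a b (H1 : a < n) (H2 : b < n) : a = b ->
  (exist (fun k => k < n) a H1 : fin_n n) = exist (fun k => k < n) b H2.
Proof. intros ->. f_equal. apply le_unique. Qed.

Lemma fwd {V} (adj : V -> V -> Prop) : is_graph adj -> countably_infinite V -> disconnected adj ->
  ME_homogeneous adj ->
  graph_iso adj (lex_product (edgeless nat) (complete nat)) \/
  exists n : nat, 0 < n /\ graph_iso adj (lex_product (edgeless nat) (complete (fin_n n))).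
Proof.
  intros Hg [e He] Hd HM. pose proof He as [Hei Hes].
  pose proof (clique adj Hg Hd HM) as Hcl.
  pose proof (reps_infinite adj e Hg Hd HM He Hcl) as HRi.
  set (idx := fun v => proj1_sig (constructive_indefinite_description _ (Hes v))).
  assert (Hidx : forall v, e (idx v) = v) by (intro v; exact (proj2_sig (constructive_indefinite_description _ (Hes v)))).
  assert (Hidx2 : forall k, idx (e k) = k) by (intro k; apply Hei; auto).
  assert (Hre : forall x, exists j, Rep adj e j /\ eqv adj (e j) x).
  { intro x. rewrite <- (Hidx x). apply rep_exists; auto. }
  set (r := fun x => proj1_sig (constructive_indefinite_description _ (Hre x))).
  assert (Hr : forall x, Rep adj e (r x) /\ eqv adj (e (r x)) x)
    by (intro x; exact (proj2_sig (constructive_indefinite_description _ (Hre x)))).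
  assert (F1 : forall x y, eqv adj x y -> r x = r y).
  { intros x y E. apply (rep_unique adj e Hg); try apply Hr.
    eapply eqv_trans; eauto. apply Hr. eapply eqv_trans; eauto. apply eqv_sym; auto. apply Hr. }
  assert (Rj : forall j k, Rep adj e j -> Cr adj e j k -> r (e k) = j).
  { intros j k Hj Hk. apply (rep_unique adj e Hg); try apply Hr; auto.
    eapply eqv_trans; eauto. apply Hr. apply eqv_sym; auto. }
  set (comp := fun x => rank (Rep adj e) (r x)).
  set (posn := fun x => rank (Cr adj e (r x)) (idx x)).
  assert (F2 : forall x y, comp x = comp y <-> eqv adj x y).
  { intros x y. split.
    - intro E. apply rank_inj in E; try apply Hr.
      eapply eqv_trans; eauto. apply eqv_sym; auto. apply Hr. rewrite E. apply Hr.
    - intro E. unfold comp. rewrite (F1 x y E). auto. }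
  assert (Cidx : forall x, Cr adj e (r x) (idx x)).
  { intro x. unfold Cr. rewrite Hidx. apply Hr. }
  assert (F3 : forall x y, eqv adj x y -> posn x = posn y -> x = y).
  { intros x y E P. unfold posn in P. rewrite (F1 x y E) in P.
    apply rank_inj in P. rewrite <- (Hidx x), <- (Hidx y), P; auto.
    rewrite <- (F1 x y E); apply Cidx. apply Cidx. }
  assert (Hinj : forall j j', exists h : nat -> nat, (forall k, Cr adj e j k -> Cr adj e j' (h k)) /\
      (forall k k', Cr adj e j k -> Cr adj e j k' -> h k = h k' -> k = k')).
  { intros j j'. destruct (inj_comp adj Hg HM Hcl (e j) (e j')) as [h [H1 H2]].
    exists (fun k => idx (h (e k))). split.
    - intros k Hk. unfold Cr. rewrite Hidx. apply H1, Hk.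
    - intros k k' Hk Hk' E. apply (f_equal e) in E. rewrite !Hidx in E. apply Hei. apply H2; auto. }
  assert (Hcomps : forall i, exists j, Rep adj e j /\ rank (Rep adj e) j = i) by (apply rank_surj_inf; auto).
  destruct (classic (infinite (Cr adj e 0))) as [Hinf|Hfin].
  - left. apply (iso_build adj nat comp posn Hg F2 F3).
    assert (Hall : forall j, infinite (Cr adj e j)).
    { intro j. apply NNPP. intro Hn. destruct (not_inf_bounded _ Hn) as [N HN].
      destruct (Hinj 0 j) as [h [H1 H2]]. eapply inf_inj_bounded; eauto. }
    intros i p. destruct (Hcomps i) as [j [Hj1 Hj2]].
    destruct (rank_surj_inf _ (Hall j) p) as [k [Hk1 Hk2]].
    exists (e k). unfold comp, posn. rewrite (Rj j k Hj1 Hk1), Hidx2. auto.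
  - destruct (not_inf_bounded _ Hfin) as [N0 HN0].
    set (n := rank (Cr adj e 0) N0).
    assert (Hsz : forall j, exists N, bounded (Cr adj e j) N /\ rank (Cr adj e j) N = n).
    { intro j. assert (exists N, bounded (Cr adj e j) N) as [N HN].
      { apply not_inf_bounded. intro Hi. destruct (Hinj j 0) as [h [H1 H2]]. eapply inf_inj_bounded; eauto. }
      exists N. split; auto.
      destruct (Hinj j 0) as [h [H1 H2]]. destruct (Hinj 0 j) as [h' [H1' H2']].
      pose proof (fin_inj_le _ _ _ _ _ HN HN0 H1 H2).
      pose proof (fin_inj_le _ _ _ _ _ HN0 HN H1' H2'). unfold n. lia. }
    right. exists n. split.
    { unfold n. change 0 with (rank (Cr adj e 0) 0). apply rank_lt_bound; auto. left; auto. }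
    assert (Hlt : forall x, posn x < n).
    { intro x. destruct (Hsz (r x)) as [N [HN HNn]]. rewrite <- HNn. apply rank_lt_bound; auto. }
    apply (iso_build adj (fin_n n) comp (fun x => exist _ (posn x) (Hlt x)) Hg F2).
    + intros x y E P. apply F3; auto. apply (f_equal (@proj1_sig _ _)) in P. exact P.
    + intros i [p Hp]. destruct (Hcomps i) as [j [Hj1 Hj2]].
      destruct (Hsz j) as [N [HN HNn]]. assert (Hp' : p < rank (Cr adj e j) N) by (rewrite HNn; auto).
      destruct (rank_ivt _ _ _ Hp') as [k [_ [Hk1 Hk2]]].
      exists (e k). split.
      * unfold comp. rewrite (Rj j k Hj1 Hk1). auto.
      * apply fin_eq. unfold posn. rewrite (Rj j k Hj1 Hk1), Hidx2. auto.
Qed.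

Theorem proposition8p4 (V : Type) (adj : V -> V -> Prop) :
  is_graph adj -> countably_infinite V -> disconnected adj ->
  (ME_homogeneous adj <->
     (graph_iso adj (lex_product (edgeless nat) (complete nat)) \/
      exists n : nat, 0 < n /\ graph_iso adj (lex_product (edgeless nat) (complete (fin_n n))))).
Proof.
  intros Hg Hc Hd. split.
  - apply fwd; auto.
  - intros [[phi [Hb Hiso]] | [n [_ [phi [Hb Hiso]]]]].
    + exact (ME_transport adj _ phi Hb Hiso (ME_W nat)).
    + exact (ME_transport adj _ phi Hb Hiso (ME_W (fin_n n))).
Qed.
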